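(* Let $p(x)$ be a probability distribution on a feature space $\mathcal X$, let $p_{\mathrm{CM}}(y\mid x)$, $y\in\{+1,-1\}$, be a conditional probability distribution, and let $\mathcal D_{\mathrm{CM}}=p(x)\,p_{\mathrm{CM}}(y\mid x)$ be the induced joint distribution of $(x,y)$. Let $r(y,x,\theta)$ be a measurable risk function with $0\le r(y,x,\theta)\le 1$ for all $y,x$ and a fixed parameter $\theta$, and write $r_1(x)=r(+1,x,\theta)$, $r_2(x)=r(-1,x,\theta)$. Then for every constant $c>0$, $$\Big(\mathbb E_{\mathcal D_{\mathrm{CM}}}\big[\mathbf 1_{r(y,x,\theta)>r(-y,x,\theta)}\big]\Big)^2\le \mathbb E_{p(x)}\Big[c\,p_{\mathrm{CM}}(+1\mid x)\,r_1(x)+c\,p_{\mathrm{CM}}(-1\mid x)\,r_2(x)+\log\big(1+e^{-c|r_1(x)-r_2(x)|}\big)+2e^{-2c|r_1(x)-r_2(x)|}\Big].$$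
   Context: Binary classification with labels $y\in\{+1,-1\}$. The left-hand side is the misclassification error, under data distributed as $\mathcal D_{\mathrm{CM}}$, of the classifier that predicts $\mathrm{argmin}_{y\in\{\pm1\}} r(y,x,\theta)$. *)

(* Defs.v *)
From HB Require Import structures.
From mathcomp Require Import all_boot all_order all_algebra.
From mathcomp Require Import all_classical all_reals all_analysis.
Set Implicit Arguments. Unset Strict Implicit. Unset Printing Implicit Defensive.
Import Order.TTheory GRing.Theory Num.Theory.
Local Open Scope ring_scope.
Local Open Scope ereal_scope.

(* Labels: y : bool, with [true] = +1 and [false] = -1; [negb] is y |-> -y. *)

(* Expectation of g(x,y) under the joint law D_CM = p(x) p_CM(y|x), where the
   conditional law is given by eta x = p_CM(+1|x) (so p_CM(-1|x) = 1 - eta x):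
   E_{D_CM}[g] = \int p(dx) (p_CM(+1|x) g(x,+1) + p_CM(-1|x) g(x,-1)). *)
Definition E_CM (d : measure_display) (T : measurableType d) (R : realType)
  (P : probability T R) (eta : T -> R) (g : T -> bool -> R) : \bar R :=
  \int[P]_x ((eta x * g x true + (1 - eta x) * g x false)%R)%:E.

Definition miscl_ind (T Theta : Type) (R : realType)
  (r : bool -> T -> Theta -> R) (theta : Theta) (x : T) (y : bool) : R :=
  if (r (~~ y) x theta < r y x theta)%R then 1%R else 0%R.

(* Main.v *)
Require Import Defs.
From HB Require Import structures.
From mathcomp Require Import all_boot all_order all_algebra.
From mathcomp Require Import all_classical all_reals all_analysis.
From mathcomp Require Import ring lra.
Import Order.TTheory GRing.Theory Num.Theory.
Local Open Scope ring_scope.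
Lemma sq_tan (R : realType) (y b : R) : 2*b*y - b^+2 <= y^+2.
Proof. have := sqr_ge0 (y - b); nra. Qed.
Lemma poly8 (R : realType) (w : R) : 3/4 <= w -> w <= 1 -> 4*w - 3 <= 2 * w^+8.
Proof.
move=> h1 h2.
pose a : R := 4/5.
have e8 : w^+8 = ((w^+2)^+2)^+2 by rewrite -!exprM.
pose p := 2*a*w - a^+2.
have hp : p <= w^+2 by apply: sq_tan.
have p0 : 0 <= p by rewrite /p /a; lra.
have hp2 : p^+2 <= (w^+2)^+2 by rewrite ler_pXn2r // ?nnegrE //; nra.
pose q : R := 2 * (a^+2) * p - (a^+2)^+2.
have hq : q <= p^+2 by apply: sq_tan.
have q0 : 0 <= q by rewrite /q /p /a; nra.
have hq2 : q^+2 <= ((w^+2)^+2)^+2.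
  rewrite ler_pXn2r // ?nnegrE //; nra.
have hr : 2*(a^+2)^+2*q - ((a^+2)^+2)^+2 <= q^+2 by apply: sq_tan.
rewrite e8. move: hr hq2; rewrite /q /p /a. nra.
Qed.

Lemma key (R : realType) (a t : R) : 0 <= a <= 1 -> 0 <= t ->
  a <= a * t + 2 * expR (-2 * t).
Proof.
move=> /andP[a0 a1] t0.
have e0 := expR_ge0 (-2 * t).
have [t1|t1] := leP 1 t.
  nra.
pose v := expR (- t / 4).
have hv : 1 + (- t / 4) <= v by apply: expR_ge1Dx.
have e8 : expR (-2 * t) = v ^+ 8.
  by rewrite /v -expRM_natl; congr expR; lra.
have w1 : 3/4 <= 1 - t/4 by lra.
have w2 : 1 - t/4 <= 1 by lra.
have hp := @poly8 R _ w1 w2.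
have hvv : (1 - t/4) ^+ 8 <= v ^+ 8.
  rewrite ler_pXn2r // ?nnegrE //; [lra|lra|lra].
rewrite e8; nra.
Qed.

Local Open Scope ereal_scope.

Lemma mono_int d (T : measurableType d) (R : realType) (mu : {measure set T -> \bar R})
  (f g : T -> \bar R) : (forall x, 0 <= f x) -> (forall x, f x <= g x) ->
  \int[mu]_x f x <= \int[mu]_x g x.
Proof.
move=> f0 fg.
have g0 : forall x, 0 <= g x by move=> x; apply: le_trans (fg x).
rewrite !ge0_integralE //.
apply: ereal_sup_le => _ [h hf <-]; exists h => //.
move=> x; apply: le_trans (hf x) _.
rewrite /patch /=. case: ifP => //.
Qed.

Theorem theorem1 (d : measure_display) (T : measurableType d) (R : realType)
  (P : probability T R) (eta : T -> R)
  (Theta : Type) (r : bool -> T -> Theta -> R) (theta : Theta) (c : R) :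
  measurable_fun setT eta ->
  (forall x, (0 <= eta x <= 1)%R) ->
  (forall y, measurable_fun setT (fun x => r y x theta)) ->
  (forall y x, (0 <= r y x theta <= 1)%R) ->
  (0 < c)%R ->
  (E_CM P eta (miscl_ind r theta)) ^+ 2 <=
  \int[P]_x
    ((c * eta x * r true x theta + c * (1 - eta x) * r false x theta
      + ln (1 + expR (- c * `|r true x theta - r false x theta|))
      + 2 * expR (- (2 * c) * `|r true x theta - r false x theta|))%R)%:E.
Proof.
move=> _ heta _ hr c0.
rewrite /E_CM /miscl_ind /=.
set f := fun x => _.
have f0 : forall x, 0 <= f x.
  move=> x; rewrite /f lee_fin; have := heta x; case: ifP; case: ifP; lra.
have f1 : forall x, f x <= 1.
  move=> x; rewrite /f lee_fin; have := heta x; case: ifP; case: ifP; lra.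
set E := \int[P]_x f x.
have E0 : 0 <= E by apply: integral_ge0 => x _.
have E1 : E <= 1.
  apply: (@le_trans _ _ (\int[P]_x (cst (1%R%:E) x))).
    by apply: mono_int => x //; exact: f1.
  by rewrite integral_cst //= probability_setT mul1e.
have E2 : E ^+ 2 <= E.
  have := E0; have := E1.
  rewrite -(fineK (x:=E)); last first.
    by rewrite ge0_fin_numE // (le_lt_trans E1) // ltry.
  move: (fine E) => e; rewrite !lee_fin => e1 e0.
  nra.
apply: (le_trans E2); apply: mono_int => // x; rewrite /f lee_fin.
have := heta x; have := hr true x; have := hr false x.
set r1 := r true x theta; set r2 := r false x theta.
have lnp : (0 <= ln (1 + expR (- c * `|r1 - r2|)))%R.
  by apply: ln_ge0; have := expR_ge0 (- c * `|r1 - r2|)%R; lra.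
have ee : (- (2 * c) * `|r1 - r2| = -2 * (c * `|r1 - r2|))%R by lra.
rewrite ee.
have e0 := expR_ge0 (-2 * (c * `|r1 - r2|))%R.
have n0 := normr_ge0 (r1 - r2)%R.
have q1 : (0 <= c * eta x * r2)%R.
  by move: (heta x) (hr false x) => /andP[? ?] /andP[? ?]; rewrite !mulr_ge0 // ltW.
have q2 : (0 <= c * (1 - eta x) * r1)%R.
  by move: (heta x) (hr true x) => /andP[? ?] /andP[? ?]; rewrite !mulr_ge0 ?subr_ge0 // ltW.
have q3 : (0 <= c * (1 - eta x) * r2)%R.
  by move: (heta x) (hr false x) => /andP[? ?] /andP[? ?]; rewrite !mulr_ge0 ?subr_ge0 // ltW.
have q4 : (0 <= c * eta x * r1)%R.
  by move: (heta x) (hr true x) => /andP[? ?] /andP[? ?]; rewrite !mulr_ge0 // ltW.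
have id1 : (eta x * (c * (r1 - r2)) = c * eta x * r1 - c * eta x * r2)%R.
  by ring.
have id2 : ((1 - eta x) * (c * (r2 - r1)) = c * (1 - eta x) * r2 - c * (1 - eta x) * r1)%R.
  by ring.
case: ifP => h12; case: ifP => h21; move=> h2 h1 he.
- lra.
- have k := @key R (eta x) (c * `|r1 - r2|)%R he.
  have ha : (`|r1 - r2| = r1 - r2)%R by rewrite ger0_norm //; lra.
  rewrite ha in k lnp *; have := k (ltac:(nra)); lra.
- have k := @key R (1 - eta x)%R (c * `|r1 - r2|)%R.
  have ha : (`|r1 - r2| = r2 - r1)%R by rewrite distrC ger0_norm //; lra.
  rewrite ha in k lnp *.
  have : (0 <= 1 - eta x <= 1)%R by lra.
  move=> /k k'; have := k' (ltac:(nra)); lra.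
- lra.
Qed.
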